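(* Let $R$ be a discrete valuation domain with maximal ideal $P$. Then the injective hull $E(R/P)$ of $R/P$ and the field of fractions $Q(R)$ of $R$ are not pseudo-absorbing primary multiplication $R$-modules. Moreover, the cyclic $R$-modules $R$ and $R/P^n$ (for every integer $n\ge1$) are pseudo-absorbing primary multiplication $R$-modules.
   Context: A proper ideal $I$ of $R$ is 2-absorbing primary if whenever $a,b,c\in R$ and $abc\in I$ then $ab\in I$ or $ac\in\sqrt I$ or $bc\in\sqrt I$. A proper submodule $N$ of an $R$-module $M$ is pseudo-absorbing primary if $(N:_RM)=\{r\in R:rM\subseteq N\}$ is a 2-absorbing primary ideal. $M$ is a pseudo-absorbing primary multiplication module if for every pseudo-absorbing primary submodule $N$ of $M$ there is an ideal $I$ of $R$ with $N=IM$. *)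

(* Defs.v *)
From HB Require Import structures.
From mathcomp Require Import all_boot all_order all_algebra.
From mathcomp Require Import fraction.
Set Implicit Arguments. Unset Strict Implicit. Unset Printing Implicit Defensive.
Import GRing.Theory.
Local Open Scope ring_scope.

Section Ideals.
Variable R : comNzRingType.

Definition is_ideal (I : R -> Prop) : Prop :=
  [/\ I 0, (forall x y, I x -> I y -> I (x + y)) & (forall r x, I x -> I (r * x))].

Definition proper_ideal (I : R -> Prop) : Prop := is_ideal I /\ ~ I 1.

Definition rad (I : R -> Prop) : R -> Prop := fun x => exists n : nat, I (x ^+ n).

Definition two_absorbing_primary (I : R -> Prop) : Prop :=
  proper_ideal I /\
  forall a b c, I (a * b * c) -> [\/ I (a * b), rad I (a * c) | rad I (b * c)].

Definition principal_ideal (I : R -> Prop) : Prop :=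
  exists a : R, forall x, I x <-> exists r : R, x = r * a.

Definition maximal_ideal (I : R -> Prop) : Prop :=
  proper_ideal I /\
  forall J : R -> Prop, is_ideal J -> (forall x, I x -> J x) ->
    (forall x, J x <-> I x) \/ (forall x, J x).

Definition ideal_mul (I J : R -> Prop) : R -> Prop := fun x =>
  exists s : seq (R * R), (forall p, p \in s -> I p.1 /\ J p.2) /\
                          x = \sum_(p <- s) p.1 * p.2.

Fixpoint ideal_pow (P : R -> Prop) (n : nat) : R -> Prop :=
  match n with
  | 0%N => fun _ => True
  | k.+1 => ideal_mul (ideal_pow P k) P
  end.
End Ideals.

(* A discrete valuation domain: a local principal ideal domain that is not a
   field.  [DVD_with_max R P]: R is a DVD and P is its (unique) maximal ideal. *)
Definition DVD_with_max (R : idomainType) (P : R -> Prop) : Prop :=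
  [/\ (forall I : R -> Prop, is_ideal I -> principal_ideal I),
      (exists x : R, x != 0 /\ x \isn't a GRing.unit),
      maximal_ideal P &
      (forall Q : R -> Prop, maximal_ideal Q -> forall x, Q x <-> P x)].

Section Modules.
Variables (R : comNzRingType) (M : lmodType R).

Definition is_submodule (N : M -> Prop) : Prop :=
  [/\ N 0, (forall x y, N x -> N y -> N (x + y)) & (forall (r : R) x, N x -> N (r *: x))].

Definition proper_submodule (N : M -> Prop) : Prop :=
  is_submodule N /\ exists m : M, ~ N m.

Definition colon (N : M -> Prop) : R -> Prop := fun r => forall m : M, N (r *: m).

Definition pseudo_absorbing_primary (N : M -> Prop) : Prop :=
  proper_submodule N /\ two_absorbing_primary (colon N).

Definition ideal_smul (I : R -> Prop) : M -> Prop := fun x =>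
  exists s : seq (R * M), (forall p, p \in s -> I p.1) /\
                          x = \sum_(p <- s) p.1 *: p.2.

Definition pap_multiplication_module : Prop :=
  forall N : M -> Prop, pseudo_absorbing_primary N ->
    exists I : R -> Prop, is_ideal I /\ forall x, N x <-> ideal_smul I x.

Definition annihilates (I : R -> Prop) (m : M) : Prop :=
  forall r : R, r *: m = 0 <-> I r.

(* M is isomorphic to R/I via 1 + I |-> m : m generates M and ann(m) = I *)
Definition cyclic_iso_quot (I : R -> Prop) (m : M) : Prop :=
  annihilates I m /\ forall x : M, exists r : R, x = r *: m.
End Modules.

Definition injective_module (R : comNzRingType) (E : lmodType R) : Prop :=
  forall (A B : lmodType R) (g : {linear A -> B}) (h : {linear A -> E}),
    injective g -> exists k : {linear B -> E}, forall a, k (g a) = h a.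

(* (E, e) is an injective hull of R/P: E is injective, r + P |-> r e is a
   (well-defined, injective) embedding R/P -> E (i.e. ann(e) = P), and its
   image R e is essential in E. *)
Definition injective_hull_of_quotient (R : comNzRingType) (P : R -> Prop)
    (E : lmodType R) (e : E) : Prop :=
  [/\ injective_module E, annihilates P e &
      forall N : E -> Prop, is_submodule N -> (exists x, N x /\ x <> 0) ->
        exists r : R, N (r *: e) /\ r *: e <> 0].

(* The field of fractions Q(R) as an R-module, r *: q := (r/1) * q *)
Definition fracmod (R : idomainType) : Type := {fraction R}.
HB.instance Definition _ (R : idomainType) := GRing.Zmodule.on (fracmod R).

Section FracMod.
Variable R : idomainType.
Definition fracmod_scale (r : R) (q : fracmod R) : fracmod R := tofrac r * q.
Lemma fracmod_scalerA a b v :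
  fracmod_scale a (fracmod_scale b v) = fracmod_scale (a * b) v.
Proof. by rewrite /fracmod_scale rmorphM mulrA. Qed.
Lemma fracmod_scale1r : left_id 1 fracmod_scale.
Proof. by move=> v; rewrite /fracmod_scale rmorph1 mul1r. Qed.
Lemma fracmod_scalerDr : right_distributive fracmod_scale +%R.
Proof. by move=> a u v; rewrite /fracmod_scale mulrDr. Qed.
Lemma fracmod_scalerDl v : {morph fracmod_scale^~ v : a b / a + b}.
Proof. by move=> a b; rewrite /fracmod_scale rmorphD mulrDl. Qed.
End FracMod.

HB.instance Definition _ (R : idomainType) :=
  GRing.Zmodule_isLmodule.Build R (fracmod R)
    (@fracmod_scalerA R) (@fracmod_scale1r R) (@fracmod_scalerDr R)
    (@fracmod_scalerDl R).

(* Main.v *)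
Require Import Defs.
From HB Require Import structures.
From mathcomp Require Import all_boot all_order all_algebra.
From mathcomp Require Import fraction.
From Stdlib Require Import Classical.
Local Open Scope ring_scope.
Import GRing.Theory.

Section Lins.
Variable R : comNzRingType.
Variable r : R.
Definition mulk : R^o -> R^o := fun x => r * x.
Fact mulk_lin : GRing.linear_for *:%R mulk.
Proof. by move=> a u v; rewrite /mulk mulrDr mulrCA. Qed.
HB.instance Definition _ := GRing.isLinear.Build R R^o R^o *:%R mulk mulk_lin.

Variable V : lmodType R.
Variable v : V.
Definition scv : R^o -> V := fun a => a *: v.
Fact scv_lin : GRing.linear_for *:%R scv.
Proof. by move=> a u w; rewrite /scv scalerDl scalerA. Qed.
HB.instance Definition _ := GRing.isLinear.Build R R^o V *:%R scv scv_lin.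
End Lins.

Section Helpers.
Variable R : idomainType.

Lemma sub_sum (M : lmodType R) (N : M -> Prop) (I : eqType) (s : seq I) (F : I -> M) :
  is_submodule N -> (forall i, i \in s -> N (F i)) -> N (\sum_(i <- s) F i).
Proof.
case=> N0 ND NZ; elim: s => [|x s IH] H; first by rewrite big_nil.
rewrite big_cons; apply: ND; first by apply: H; rewrite mem_head.
by apply: IH => i Hi; apply: H; rewrite in_cons Hi orbT.
Qed.

Lemma not_pap (M : lmodType R) (e : M) (p : R) :
  (forall r : R, r != 0 -> forall m : M, exists y, m = r *: y) ->
  (forall s : R, (p * s) *: e <> e) -> p != 0 ->
  ~ pap_multiplication_module M.
Proof.
move=> div nfix p0 pap.
pose N := fun x : M => exists r : R, x = r *: e.
have subN : is_submodule N.
  split; first by exists 0; rewrite scale0r.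
    by move=> x y [r1 ->] [r2 ->]; exists (r1 + r2); rewrite scalerDl.
  by move=> r x [r1 ->]; exists (r * r1); rewrite scalerA.
have [y ey] := div p p0 e.
have yN : ~ N y by case=> s ys; apply: (nfix s); rewrite -scalerA -ys -ey.
have colon0 : forall r, colon N r -> r = 0.
  move=> r Hr; case: (eqVneq r 0) => // r0; exfalso.
  have [z ez] := div r r0 y; apply: yN; rewrite ez; exact: Hr.
have c0 : colon N 0 by move=> m; rewrite scale0r; case: subN.
have papN : pseudo_absorbing_primary N.
  split; first by split=> //; exists y.
  split.
    split; last by move=> H; apply: yN; have := H y; rewrite scale1r.
    case: subN => N0 ND NZ; split=> //.
      by move=> a b Ha Hb m; rewrite scalerDl; apply: ND.
    by move=> a b Hb m; rewrite -scalerA; apply: NZ.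
  move=> a b c /colon0 /eqP; rewrite !mulf_eq0 => /orP[/orP[]|] /eqP->.
  - by constructor 1; rewrite mul0r.
  - by constructor 1; rewrite mulr0.
  - by constructor 2; exists 1%N; rewrite mulr0 expr1.
case: (pap N papN) => I [_ HI].
have [s [sI es]] : ideal_smul I e by apply/HI; exists 1; rewrite scale1r.
have key : forall s : seq (R * M), (forall q, q \in s -> I q.1) ->
    exists z, ideal_smul I z /\ \sum_(q <- s) q.1 *: q.2 = p *: z.
  elim=> [|[a m] s' IH] Hs.
    by exists 0; split; [exists [::]; split=> //; rewrite big_nil | rewrite big_nil scaler0].
  have [z [[t [tI ->]] ez]] : exists z, ideal_smul I z /\ \sum_(q <- s') q.1 *: q.2 = p *: z.
    by apply: IH => q Hq; apply: Hs; rewrite in_cons Hq orbT.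
  have [w ->] := div p p0 m.
  exists (a *: w + \sum_(q <- t) q.1 *: q.2); split.
    exists ((a, w) :: t); split; last by rewrite big_cons.
    move=> q; rewrite in_cons => /orP[/eqP -> /=|]; last exact: tI.
    by apply: (Hs (a, m)); rewrite mem_head.
  by rewrite big_cons /= ez scalerDr !scalerA mulrC.
have [z [zI ez]] := key s sI.
have [t zt] : N z by apply/HI.
by apply: (nfix t); rewrite -scalerA -zt -ez -es.
Qed.

Lemma inj_div (E : lmodType R) : injective_module E ->
  forall r : R, r != 0 -> forall m : E, exists y, m = r *: y.
Proof.
move=> H r r0 m.
have inj : injective (@mulk R r) by move=> a b; rewrite /mulk; apply: mulfI.
have [k Hk] := H R^o R^o (@mulk R r) (@scv R E m) inj.
exists (k 1); have := Hk 1.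
move=> H1; change (k (r *: (1 : R^o)) = 1 *: m) in H1.
by rewrite linearZ scale1r in H1.
Qed.

End Helpers.

Theorem proposition2p5 (R : idomainType) (P : R -> Prop) :
  DVD_with_max P ->
  [/\ (forall (E : lmodType R) (e : E),
         injective_hull_of_quotient P e -> ~ pap_multiplication_module E),
      ~ pap_multiplication_module (fracmod R),
      pap_multiplication_module R^o &
      (forall n : nat, (1 <= n)%N ->
         forall (M : lmodType R) (m : M),
           cyclic_iso_quot (ideal_pow P n) m -> pap_multiplication_module M)].
Proof.
case=> _ [x [x0 xnu]] [[[P0 PD PZ] P1] Pmax] _.
split.
- move=> E e [injE ann _].
  have [p [Pp p0]] : exists p, P p /\ p != 0.
    apply: NNPP => Hn.
    pose J := fun y : R => exists r, y = r * x.
    have Jid : is_ideal J.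
      split; first by exists 0; rewrite mul0r.
        by move=> a b [r1 ->] [r2 ->]; exists (r1 + r2); rewrite mulrDl.
      by move=> r a [r1 ->]; exists (r * r1); rewrite mulrA.
    have PJ : forall y, P y -> J y.
      move=> y Py; case: (eqVneq y 0) => [->|y0]; first by exists 0; rewrite mul0r.
      by exfalso; apply: Hn; exists y.
    case: (Pmax J Jid PJ) => [HJ|HJ].
      by apply: Hn; exists x; split=> //; apply/HJ; exists 1; rewrite mul1r.
    have [r /esym r1] := HJ 1.
    by move/negP: xnu; apply; apply/unitrPr; exists r; rewrite mulrC.
  apply: (@not_pap R E e p (@inj_div R E injE) _ p0) => s.
  have e0 : e != 0.
    by apply/eqP => e0; apply: P1; apply/ann; rewrite e0 scaler0.
  rewrite mulrC -scalerA (proj2 (ann p) Pp) scaler0 => /esym/eqP.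
  by rewrite (negbTE e0).
- apply: (@not_pap R (fracmod R) (1 : {fraction R}) x _ _ x0).
    move=> r r0 m.
    exists ((tofrac r)^-1 * (m : {fraction R}) : {fraction R}).
    change ((m : {fraction R}) = (tofrac r : {fraction R}) * ((tofrac r)^-1 * (m : {fraction R}))).
    by rewrite mulrA mulfV ?mul1r // tofrac_eq0.
  move=> s.
  change ((tofrac (x * s) : {fraction R}) * 1 <> 1).
  rewrite mulr1 -(rmorph1 (@tofrac R)) => /eqP; rewrite tofrac_eq => /eqP xs.
  by move/negP: xnu; apply; apply/unitrPr; exists s.
- move=> N [[[N0 ND NZ] _] _].
  exists N; split; first by split=> // r y Ny; exact: (NZ r y Ny).
  move=> y; split.
    move=> Ny; exists [:: (y, 1)]; split; last by rewrite big_seq1 /= -[RHS]/(y * 1 : R) mulr1.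
    by move=> q; rewrite mem_seq1 => /eqP ->.
  case=> s [sI ->]; apply: sub_sum => //.
  move=> q /sI Hq.
  change (N (q.1 * q.2)); rewrite mulrC; exact: (NZ q.2 q.1 Hq).
- move=> n _ M m [_ gen] N [[[N0 ND NZ] _] _].
  exists (fun r => N (r *: m)); split.
    split; first by rewrite scale0r.
      by move=> a b Ha Hb; rewrite scalerDl; apply: ND.
    by move=> a b Hb; rewrite -scalerA; apply: NZ.
  move=> y; split.
    have [r ->] := gen y.
    move=> Ny; exists [:: (r, m)]; split; last by rewrite big_seq1.
    by move=> q; rewrite mem_seq1 => /eqP ->.
  case=> s [sI ->]; apply: sub_sum => //.
  move=> q /sI Hq.
  have [t ->] := gen q.2.
  by rewrite scalerA mulrC -scalerA; apply: NZ.
Qed.
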